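(* Let $\mathfrak P$ be a prime ideal of $\mathcal O$ over $\mathfrak p$ and ${\mathcal B}$ a finite family of nonzero elements of $L$. Then ${\mathcal B}$ is $w_\mathfrak P$-semi-reduced if and only if the family $\big(\operatorname{sred}^{w_\mathfrak P(b)}_\mathfrak P(b)\big)_{b\in{\mathcal B}}$ is linearly independent over $k_\mathfrak p$.
   Context: Let $A$ be a Dedekind domain with fraction field $K$, $\mathfrak p$ a nonzero prime ideal with valuation $v_\mathfrak p$, $\pi\in\mathfrak p$ with $v_\mathfrak p(\pi)=1$, $k_\mathfrak p=A/\mathfrak p$. Let $f\in A[x]$ be monic irreducible separable, $\theta$ a root, $L=K(\theta)$, $\mathcal O$ the integral closure of $A$ in $L$. For a prime $\mathfrak P$ of $\mathcal O$ over $\mathfrak p$ with ramification index $e$, let $v_\mathfrak P$ be its normalized valuation, $\mathcal O_{(\mathfrak P)}$ its valuation ring, $w_\mathfrak P=v_\mathfrak P/e$. The quotient $\mathcal O_{(\mathfrak P)}/\pi\mathcal O_{(\mathfrak P)}=\mathcal O_{(\mathfrak P)}/\mathfrak P^e\mathcal O_{(\mathfrak P)}$ is a $k_\mathfrak p$-vector space (the paper encodes its elements by the first $e$ digits of $\pi_\mathfrak P$-adic expansions, as elements of $k_\mathfrak P^e$). For $r\in\mathbb Q$ and $z\in L$ with $w_\mathfrak P(z)\ge\lfloor r\rfloor$, define $\operatorname{sred}^r_\mathfrak P(z)$ as the class of $\pi^{-\lfloor r\rfloor}z$ in $\mathcal O_{(\mathfrak P)}/\pi\mathcal O_{(\mathfrak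 P)}$. A finite family ${\mathcal B}\subset L$ is $w$-semi-reduced if $\lfloor w(\sum_b\lambda_bb)\rfloor=\min_b\lfloor w(\lambda_bb)\rfloor$ for all $\lambda_b\in K$. *)

(* Defs.v *)
From HB Require Import structures.
From mathcomp Require Import all_boot all_order all_algebra all_field.
Set Implicit Arguments. Unset Strict Implicit. Unset Printing Implicit Defensive.
Import Order.TTheory GRing.Theory Num.Theory.
Local Open Scope ring_scope.

(* A (normalized-or-not) discrete valuation, given by its values on nonzero
   elements: v : R -> int, only meaningful on R^x (the value at 0 stands for
   +infinity and is never used). *)
Definition is_dval (R : nzRingType) (v : R -> int) : Prop :=
  (forall x y : R, x != 0 -> y != 0 -> v (x * y) = v x + v y) /\
  (forall x y : R, x != 0 -> y != 0 -> x + y != 0 ->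
     Num.min (v x) (v y) <= v (x + y)).

Definition wP (K : fieldType) (L : fieldExtType K) (vP : L -> int) (e : nat)
  (z : L) : rat := (vP z)%:~R / e%:R.

(* floor (w_P z) in Z u {+oo}: None encodes +oo (i.e. z = 0). *)
Definition floorw (K : fieldType) (L : fieldExtType K) (vP : L -> int)
  (e : nat) (z : L) : option int :=
  if z == 0 then None else Some (Num.floor (wP vP e z)).

Definition omin (x y : option int) : option int :=
  match x, y with
  | None, _ => y
  | _, None => x
  | Some a, Some b => Some (Num.min a b)
  end.

Definition semi_reduced (K : fieldType) (L : fieldExtType K) (vP : L -> int)
  (e : nat) (n : nat) (B : 'I_n -> L) : Prop :=
  forall lam : 'I_n -> K,
    floorw vP e (\sum_(i < n) lam i *: B i)
    = \big[omin/None]_(i < n) floorw vP e (lam i *: B i).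

Definition in_Op (K : fieldType) (vp : K -> int) (c : K) : Prop :=
  c = 0 \/ 0 <= vp c.
Definition in_pOp (K : fieldType) (vp : K -> int) (c : K) : Prop :=
  c = 0 \/ 1 <= vp c.
Definition in_piOP (K : fieldType) (L : fieldExtType K) (vP : L -> int)
  (e : nat) (z : L) : Prop :=
  z = 0 \/ e%:Z <= vP z.                     (* z in pi O_(P) = P^e O_(P) *)

(* A representative in O_(P) of sred^r_P(z): pi^(-floor r) z. *)
Definition sred_rep (K : fieldType) (L : fieldExtType K) (pi : K) (r : rat)
  (z : L) : L := (pi ^ (- Num.floor r)) *: z.

(* The classes of the z_i in O_(P)/pi O_(P) are linearly independent over
   k_p = O_(p)/p O_(p) (= A/p): any relation sum_i c_i [z_i] = 0 with
   c_i in O_(p) has all c_i in p O_(p). *)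
Definition kp_lin_indep (K : fieldType) (L : fieldExtType K) (vp : K -> int)
  (vP : L -> int) (e : nat) (n : nat) (z : 'I_n -> L) : Prop :=
  forall c : 'I_n -> K,
    (forall i, in_Op vp (c i)) ->
    in_piOP vP e (\sum_(i < n) c i *: z i) ->
    forall i, in_pOp vp (c i).

(* Main.v *)
Require Import Defs.
From HB Require Import structures.
From mathcomp Require Import all_boot all_order all_algebra all_field.
From mathcomp Require Import zify lra.
Import Order.TTheory GRing.Theory Num.Theory.
Local Open Scope ring_scope.

Lemma floor_divP (v m : int) (e : nat) : (0 < e)%N ->
  (Num.floor ((v%:~R : rat) / e%:R) = m) <-> (m * e%:Z <= v < (m + 1) * e%:Z).
Proof.
move=> e0.
have eP : (0 : rat) < e%:R by rewrite ltr0n.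
split.
- move=> <-. have /andP[h1 h2] := floor_itv ((v%:~R : rat) / e%:R).
  rewrite ler_pdivlMr // in h1; rewrite ltr_pdivrMr // in h2.
  apply/andP; split.
  + by rewrite -(ler_int rat) intrM.
  + by rewrite -(ltr_int rat) intrM.
- move=> /andP[h1 h2]; apply: floor_def; apply/andP; split.
  + by rewrite ler_pdivlMr //; move: h1; rewrite -(ler_int rat) intrM.
  + by rewrite ltr_pdivrMr //; move: h2; rewrite -(ltr_int rat) intrM.
Qed.

Lemma dval1 (R : nzRingType) (v : R -> int) : is_dval v -> v 1 = 0.
Proof. move=> [hm _]; have := hm 1 1 (oner_neq0 _) (oner_neq0 _).
rewrite mulr1 => h; lia. Qed.
Lemma dvalZ (K : fieldType) (L : fieldExtType K) (vp : K -> int) (vP : L -> int)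
  (e : nat) : is_dval vP -> (forall x : K, x != 0 -> vP (x%:A) = e%:Z * vp x) ->
  forall (c : K) (y : L), c != 0 -> y != 0 -> vP (c *: y) = e%:Z * vp c + vP y.
Proof.
move=> [hm _] hA c y c0 y0.
have cA : c%:A != 0 :> L by rewrite scaler_eq0 negb_or c0 oner_neq0.
by rewrite -mulr_algl hm // hA.
Qed.

Lemma dvalX (K : fieldType) (vp : K -> int) (pi : K) : is_dval vp ->
  pi != 0 -> vp pi = 1 -> forall z : int, vp (pi ^ z) = z.
Proof.
move=> hv p0 p1.
have hm := hv.1.
have Hn : forall n : nat, vp (pi ^ n) = n.
  elim=> [|n IH]; first by rewrite expr0z (@dval1 _ _ hv).
  rewrite exprSz hm ?p1 ?IH; last by rewrite expfz_neq0.
    lia.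
  done.
move=> z.
have hz : vp (pi ^ z) + vp (pi ^ (- z)) = 0.
  rewrite -hm ?expfz_neq0 // -expfzDr // subrr expr0z (@dval1 _ _ hv) //.
case: z hz => n hz; first by rewrite Hn.
rewrite NegzE opprK Hn in hz. rewrite NegzE. lia.
Qed.

Lemma sum_ultra (R : nzRingType) (v : R -> int) (k : int) (n : nat)
  (F : 'I_n -> R) : is_dval v ->
  (forall i, F i = 0 \/ k <= v (F i)) ->
  (\sum_(i < n) F i = 0 \/ k <= v (\sum_(i < n) F i)).
Proof.
move=> [_ hu] hF.
apply: (big_ind (fun x => x = 0 \/ k <= v x)); [by left | | by move=> i _; apply: hF].
move=> x y [->|hx]; first by rewrite add0r.
move=> [->|hy]; first by rewrite addr0; right.
have [x0|x0] := eqVneq x 0; first by rewrite x0 add0r; right.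
have [y0|y0] := eqVneq y 0; first by rewrite y0 addr0; right.
have [s0|s0] := eqVneq (x + y) 0; first by left.
right; apply: le_trans (hu x y x0 y0 s0).
by rewrite le_min hx hy.
Qed.
Lemma ominA : associative omin.
Proof. by case=> [a|] [b|] [c|] //=; rewrite minA. Qed.
Lemma ominC : commutative omin.
Proof. by case=> [a|] [b|] //=; rewrite minC. Qed.
Lemma omin1 : left_id None omin.
Proof. by case. Qed.
HB.instance Definition _ := Monoid.isComLaw.Build (option int) None omin ominA ominC omin1.

Lemma big_omin_some (n : nat) (F : 'I_n -> option int) (m : int) (j : 'I_n) :
  F j = Some m -> (forall i, F i = None \/ exists a, F i = Some a /\ m <= a) ->
  \big[omin/None]_(i < n) F i = Some m.
Proof.
move=> Fj hF; rewrite (bigD1 j) //= Fj.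
have : (\big[omin/None]_(i < n | i != j) F i = None \/
   exists a, \big[omin/None]_(i < n | i != j) F i = Some a /\ m <= a).
  apply: (big_ind (fun o => o = None \/ exists a, o = Some a /\ m <= a)).
  - by left.
  - move=> x y [->|[a [-> ha]]] [->|[b [-> hb]]] /=; try by left.
    + by right; exists b.
    + by right; exists a.
    + by right; exists (Num.min a b); split=> //; rewrite le_min ha hb.
  - by move=> i _; apply: hF.
by move=> [->|[a [-> ha]]] //=; congr Some; apply/min_idPl.
Qed.

Lemma big_omin_none (n : nat) (F : 'I_n -> option int) :
  (forall i, F i = None) -> \big[omin/None]_(i < n) F i = None.
Proof. by move=> h; apply: big1 => i _; apply: h. Qed.

Lemma floorw_some (K : fieldType) (L : fieldExtType K) (vP : L -> int) (e : nat)
  (y : L) (m : int) : (0 < e)%N -> y != 0 ->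
  m * e%:Z <= vP y < (m + 1) * e%:Z -> floorw vP e y = Some m.
Proof.
by move=> e0 y0 h; rewrite /floorw (negbTE y0); congr Some; apply/floor_divP.
Qed.

Lemma floorw0 (K : fieldType) (L : fieldExtType K) (vP : L -> int) (e : nat) :
  floorw vP e 0 = None.
Proof. by rewrite /floorw eqxx. Qed.

Theorem mainTheorem5 (K : fieldType) (L : fieldExtType K)
  (vp : K -> int) (vP : L -> int) (e : nat) (pi : K)
  (n : nat) (B : 'I_n -> L) :
  is_dval vp -> is_dval vP ->
  pi != 0 -> vp pi = 1 ->
  (0 < e)%N ->
  (forall x : K, x != 0 -> vP (x%:A) = e%:Z * vp x) ->
  (exists t : L, t != 0 /\ vP t = 1) ->
  (forall i, B i != 0) ->
  (semi_reduced vP e B <->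
   kp_lin_indep vp vP e (fun i => sred_rep pi (wP vP e (B i)) (B i))).
Proof.
move=> hvp hvP p0 pp e0 hA _ hB.
have hvZ := dvalZ _ _ _ _ _ hvP hA.
have hX := dvalX _ _ _ hvp p0 pp.
have hmp := hvp.1.
set f := fun i => Num.floor (wP vP e (B i)).
have hf : forall i, f i * e%:Z <= vP (B i) < (f i + 1) * e%:Z.
  by move=> i; apply: (proj1 (floor_divP (vP (B i)) (f i) _ e0)).
rewrite /sred_rep -/f.
set z := fun i => pi ^ (- f i) *: B i.
have hpX : forall k : int, pi ^ k != 0 by move=> k; rewrite expfz_neq0.
have hz : forall i, z i != 0 /\ 0 <= vP (z i) < e%:Z.
  move=> i; split; first by rewrite /z scaler_eq0 negb_or hpX hB.
  rewrite /z hvZ ?hpX ?hB // hX; have := hf i; nia.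
have fwZ : forall (c : K) i, c != 0 -> floorw vP e (c *: z i) = Some (vp c).
  move=> c i c0; have [z0 hzi] := hz i.
  apply: floorw_some => //; first by rewrite scaler_eq0 negb_or c0 z0.
  rewrite hvZ //; nia.
split.
- move=> SR c Hc Hs i.
  case: (Hc i) => [ci0|ci]; first by left.
  have [ci1|ci1] := lerP 1 (vp (c i)); first by right.
  have [ci00|ci0] := eqVneq (c i) 0; first by left.
  exfalso.
  have := SR (fun j => c j * pi ^ (- f j)).
  have eq : forall j, (c j * pi ^ (- f j)) *: B j = c j *: z j.
    by move=> j; rewrite scalerA.
  under eq_bigr do rewrite eq.
  under [in RHS]eq_bigr do rewrite eq.
  rewrite (@big_omin_some _ _ 0 i); first last.
  + move=> j; have [cj0|cj0] := eqVneq (c j) 0.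
      by left; rewrite cj0 scale0r floorw0.
    right; exists (vp (c j)); rewrite fwZ //; split=> //.
    by case: (Hc j) => // h; rewrite h eqxx in cj0.
  + rewrite fwZ //; congr Some; lia.
  rewrite /floorw; case: eqP => // S0 [] /(floor_divP _ _ _ e0) h.
  case/andP: h => _ h; case: Hs => // h2; rewrite add0r mul1r in h.
  by have := le_lt_trans h2 h; rewrite ltxx.
- move=> LI lam.
  case: (pickP (fun i => lam i != 0)) => [j0 hj0 | hnone]; last first.
    have l0 : forall i, lam i = 0 by move=> i; have := hnone i => /= /negbFE/eqP.
    rewrite big1; last by move=> i _; rewrite l0 scale0r.
    rewrite floorw0 big_omin_none // => i; by rewrite l0 scale0r floorw0.
  set g := fun i => vp (lam i) + f i.
  case: (@arg_minP _ _ _ j0 (fun i => lam i != 0) g hj0) => j hj hmin.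
  set m := g j.
  set c := fun i => lam i * pi ^ (f i - m).
  have cz : forall i, c i *: z i = pi ^ (- m) *: (lam i *: B i).
    move=> i; rewrite /c /z !scalerA; congr (_ *: _).
    rewrite -mulrA -expfzDr // addrAC subrr add0r mulrC //.
  have Hc : forall i, in_Op vp (c i).
    move=> i; have [l0|l0] := eqVneq (lam i) 0; first by left; rewrite /c l0 mul0r.
    right; rewrite /c hmp // hX; have := hmin i l0; rewrite /m /g => h; rewrite addrA subr_ge0; exact: h.
  have Hcj : ~ in_pOp vp (c j).
    rewrite /in_pOp /c hmp // hX /m /g => -[].
      by apply/eqP; rewrite mulf_neq0.
    lia.
  have NS : ~ in_piOP vP e (\sum_(i < n) c i *: z i).
    by move=> h; apply: Hcj; apply: LI.
  have Hu := sum_ultra _ _ 0 _ (fun i => c i *: z i) hvP.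
  have [Sz|Sz] : (\sum_(i < n) c i *: z i = 0 \/ 0 <= vP (\sum_(i < n) c i *: z i)).
    apply: Hu => i; have [ci0|ci0] := eqVneq (c i) 0; first by left; rewrite ci0 scale0r.
    right; have [z0 hzi] := hz i; rewrite hvZ //.
    case: (Hc i) => [h|h]; first by rewrite h eqxx in ci0.
    nia.
  + by exfalso; apply: NS; left.
  set S := \sum_(i < n) lam i *: B i.
  have eS : \sum_(i < n) c i *: z i = pi ^ (- m) *: S.
    by rewrite scaler_sumr; apply: eq_bigr => i _; exact: cz.
  rewrite eS in NS Sz.
  have S0 : S != 0.
    by apply/eqP => h; apply: NS; left; rewrite h scaler0.
  rewrite /in_piOP in NS.
  rewrite hvZ // hX in NS Sz.
  rewrite (@floorw_some _ _ _ _ _ m) //; last first.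
    have h : ~ (e%:Z <= e%:Z * - m + vP S) by move=> h; apply: NS; right.
    nia.
  symmetry; apply: (@big_omin_some _ _ m j).
    apply: floorw_some => //; first by rewrite scaler_eq0 negb_or hj hB.
    rewrite hvZ ?hB //; have := hf j; rewrite /m /g; nia.
  move=> i; have [l0|l0] := eqVneq (lam i) 0.
    by left; rewrite l0 scale0r floorw0.
  right; exists (g i); split; last exact: hmin.
  apply: floorw_some => //; first by rewrite scaler_eq0 negb_or l0 hB.
  rewrite hvZ ?hB //; have := hf i; rewrite /g; nia.
Qed.
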